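(* Let $L$ be a finite list, $g: L\to\{0,1\}$ a Boolean function and $\epsilon > 0$, and let $c_q$ be the number of queries to $g$ required to implement the oracle $\mathcal{O}_g|x\rangle|0\rangle = |x\rangle|g(x)\rangle$. Then, with probability of failure at most $\epsilon$, the algorithm $\textbf{QSearch}_{\text{Zalka}}$ requires at most $$W_{\textbf{QSearch}_{\text{Zalka}}}(|L|,\epsilon) := c_q\left(5\left\lceil \frac{\ln(1/\epsilon)}{2\ln(4/3)}\right\rceil + \pi\sqrt{|L|}\sqrt{\left\lceil \frac{\ln(1/\epsilon)}{2\ln(4/3)}\right\rceil}\right)$$ queries to $g$ to find a marked item of $L$ (an $x$ with $g(x)=1$), or otherwise to report that there is none.
   Context: Each use of $\mathcal{O}_g$ counts as $c_q$ queries to $g$. A Grover iteration is the unitary reflecting through the unmarked states (one query to $\mathcal{O}_g$) followed by a reflection through the uniform superposition over $L$; a Grover run with $j$ iterations prepares the uniform superposition, applies $j$ Grover iterations, measures, and checks the outcome with one further query. Exact Grover search for a known number $t>0$ of marked items is a procedure that, when $L$ has exactly $t$ marked items, returns a marked item with certainty using $\lfloor \frac{\pi}{4}\sqrt{|L|/t} - \frac12 \rceil + 1$ queries to $\mathcal{O}_g$ (where $\lfloor\cdot\rceil$ is the nearest integer). Algorithm $\textbf{QSearch}_{\text{Zalka}}$ with target failure probability $\epsilon$: let $t_0 = \lceil \frac{\ln\epsilon}{2\ln(3/4)}\rceil$. Step 1: for $t = 1, 2, \dots, t_0$, run exact Grover search assuming exactly $t$ marked items; if a marked item is found, return it and stop.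 Step 2: repeat $2t_0$ times: choose an integer $j$ uniformly at random from $[0, \lceil \frac{\pi}{4}\sqrt{|L|/t_0}\rceil]$ and perform a Grover run with $j$ iterations; if a marked item is found, return it and stop. If nothing is found, return ''no marked item''. *)

(* Defs.v *)
From HB Require Import structures.
From mathcomp Require Import all_boot all_order all_algebra.
From mathcomp Require Import all_classical all_reals all_analysis.
Set Implicit Arguments. Unset Strict Implicit. Unset Printing Implicit Defensive.
Import Order.TTheory GRing.Theory Num.Theory.
Local Open Scope ring_scope.

Section QSearch.
Variables (R : realType) (T : finType).

Definition NL : nat := #|T|.

Definition nearest (y : R) : int := Num.floor (y + 2^-1).

Definition t0Z (eps : R) : int := Num.ceil (ln eps / (2 * ln (3 / 4))).
Definition t0 (eps : R) : nat := `|t0Z eps|%N.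

(* upper end of the random range in Step 2: ceil(pi/4 sqrt(|L|/t0)) *)
Definition Jmax (eps : R) : nat :=
  `|Num.ceil ((pi : R) / 4 * Num.sqrt (NL%:R / (t0 eps)%:R))|%N.

(* queries to O_g of exact Grover search assuming t marked items *)
Definition exact_queries (t : nat) : nat :=
  (`|nearest ((pi : R) / 4 * Num.sqrt (NL%:R / t%:R) - 2^-1)|%N + 1)%N.

(* queries to O_g of a Grover run with j iterations (j iterations + check) *)
Definition run_queries (j : nat) : nat := (j + 1)%N.

(* An execution trace of QSearch_Zalka: Step 1 executed for t = 1..k, and
   Step 2 executed with the iteration counts js (in order).  The algorithm
   may stop at any point (as soon as a marked item is found). *)
Definition valid_trace (eps : R) (k : nat) (js : seq nat) : Prop :=
  [/\ (k <= t0 eps)%N, js != [::] -> k = t0 eps,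
      (size js <= 2 * t0 eps)%N & all (fun j => j <= Jmax eps)%N js].

Definition trace_oracle_uses (k : nat) (js : seq nat) : nat :=
  (\sum_(1 <= t < k.+1) exact_queries t + \sum_(j <- js) run_queries j)%N.

Definition W_Zalka (cq : nat) (eps : R) : R :=
  let t := (Num.ceil (ln (1 / eps) / (2 * ln (4 / 3))))%:~R in
  cq%:R * (5 * t + (pi : R) * Num.sqrt NL%:R * Num.sqrt t).

Definition qstate := T -> R.
Definition uniform : qstate := fun _ => 1 / Num.sqrt NL%:R.
(* reflection through the unmarked states (one use of O_g) *)
Definition refl_unmarked (g : T -> bool) (v : qstate) : qstate :=
  fun x => if g x then - v x else v x.
Definition refl_uniform (v : qstate) : qstate :=
  fun x => 2 * (\sum_y v y) / NL%:R - v x.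
Definition grover_iter (g : T -> bool) (v : qstate) : qstate :=
  refl_uniform (refl_unmarked g v).
Definition grover_state (g : T -> bool) (j : nat) : qstate :=
  iter j (grover_iter g) uniform.
(* probability that a Grover run with j iterations measures (and hence,
   after the check, returns) a marked item *)
Definition run_success (g : T -> bool) (j : nat) : R :=
  \sum_(x | g x) (grover_state g j x) ^+ 2.

(* Probability that QSearch_Zalka reports "no marked item".  p t is the
   probability that exact Grover search assuming t marked items returns a
   marked item; in Step 2 each of the 2 t0 runs picks j uniformly in
   [0, Jmax], independently. *)
Definition fail_prob (g : T -> bool) (p : nat -> R) (eps : R) : R :=
  (\prod_(1 <= t < (t0 eps).+1) (1 - p t)) *
  (1 - (\sum_(j < (Jmax eps).+1) run_success g j) / (Jmax eps).+1%:R)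
    ^+ (2 * t0 eps).

End QSearch.

(* Main.v *)
Require Import Defs.
From HB Require Import structures.
From mathcomp Require Import all_boot all_order all_algebra.
From mathcomp Require Import all_classical all_reals all_analysis.
From mathcomp Require Import ring lra zify.
Import Order.TTheory GRing.Theory Num.Theory.
Local Open Scope ring_scope.
Section Trig.
Variable R : realType.
Lemma tele (x : R) n : 2 * sin x * \sum_(j < n) cos ((2 * j%:R + 1) * x) = sin (2 * n%:R * x).
Proof.
elim: n => [|n IH]; first by rewrite big_ord0 mulr0 mulr0 mul0r sin0.
rewrite big_ord_recr /= mulrDr IH.
have e1 : 2 * n.+1%:R * x = (2 * n%:R + 1) * x + x by rewrite -addn1 natrD; ring.
have e2 : 2 * n%:R * x = (2 * n%:R + 1) * x - x by ring.
rewrite e1 e2 !sinD sinN cosN; ring.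
Qed.

Lemma sin_nat (y : R) n : `|sin (n%:R * y)| <= n%:R * `|sin y|.
Proof.
elim: n => [|n IH]; first by rewrite !mul0r sin0 normr0.
have -> : n.+1%:R * y = n%:R * y + y by rewrite -addn1 natrD; ring.
rewrite sinD -addn1 natrD mulrDl mul1r.
apply: (le_trans (ler_normD _ _)).
rewrite !normrM; apply: lerD.
  apply: (le_trans _ IH); rewrite -[X in _ <= X]mulr1; apply: ler_wpM2l => //; exact: cos_max.
rewrite -[X in _ <= X]mul1r; apply: ler_wpM2r => //; exact: cos_max.
Qed.

Lemma cos_npi n : cos (n%:R * pi) = (-1) ^+ n :> R.
Proof.
elim: n => [|n IH]; first by rewrite mul0r cos0 expr0.
by rewrite -addn1 natrD mulrDl mul1r cosDpi IH exprD expr1 mulrN1.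
Qed.
Lemma sin_npi n : sin (n%:R * pi) = 0 :> R.
Proof.
elim: n => [|n IH]; first by rewrite mul0r sin0.
by rewrite -addn1 natrD mulrDl mul1r sinDpi IH oppr0.
Qed.

Lemma odd_coef (j : nat) : (j.*2.+1)%:R = 2 * j%:R + 1 :> R.
Proof. by rewrite -addn1 natrD -muln2 natrM mulrC. Qed.

Lemma cos_refl (psi : R) (j : nat) :
  cos ((2 * j%:R + 1) * (pi - psi)) = - cos ((2 * j%:R + 1) * psi).
Proof.
rewrite mulrBr -odd_coef cosD cosN sinN cos_npi sin_npi.
by rewrite -signr_odd /= odd_double /= expr1; ring.
Qed.

Lemma avg_bound (th : R) (M : nat) : 0 <= th <= pi/2 -> (0 < M)%N ->
  (0 <= cos (2*th) -> 1 <= M%:R * sin (2*th)) ->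
  M%:R / 4 <= \sum_(j < M) sin ((2*j%:R+1) * th) ^+ 2.
Proof.
move=> /andP[th0 th1] M0 hA.
have E : forall j : nat, sin ((2*j%:R+1) * th) ^+ 2 = (1 - cos ((2*j%:R+1) * (2 * th))) / 2.
  move=> j; have -> : (2*j%:R+1) * (2 * th) = ((2*j%:R+1) * th) *+ 2 by rewrite mulr2n; ring.
  by rewrite cos_mulr2n sin2cos2; field.
under eq_bigr => j _ do rewrite E.
rewrite -mulr_suml sumrB sumr_const card_ord.
set S := \sum_(i < M) _.
have Mpos : (0 < M%:R :> R) by rewrite ltr0n.
suff : S <= M%:R / 2.
  move=> h; rewrite -[1 *+ M]/(M%:R); lra.
have [c0|c0] := lerP 0 (cos (2 * th)).
  have h1 := hA c0.
  have sp : 0 < sin (2 * th).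
    rewrite ltNge; apply/negP => hs.
    have : M%:R * sin (2 * th) <= 0 by rewrite mulr_ge0_le0 // ler0n.
    lra.
  have ht := tele (2 * th) M.
  have := sin_le1 (2 * M%:R * (2 * th)).
  rewrite -ht -/S => h2.
  nra.
set psi := pi - 2 * th.
have thpi : pi / 2 < 2 * th.
  rewrite ltNge; apply/negP => h.
  have : 0 <= cos (2 * th) by apply: cos_ge0_pihalf; rewrite h andbT; have := pi_ge0 R; lra.
  lra.
have eS : S = - \sum_(j < M) cos ((2 * j%:R + 1) * psi).
  rewrite /S -sumrN; apply: eq_bigr => j _.
  rewrite -cos_refl /psi; congr (cos (_ * _)); ring.
rewrite eS.
set C := \sum_(j < M) _.
have psi0 : 0 <= psi by rewrite /psi; lra.
have psi1 : psi < pi / 2 by rewrite /psi; lra.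
have [/eqP pz|pnz] := boolP (psi == 0).
  have -> : C = M%:R.
    rewrite /C; under eq_bigr => j _ do rewrite pz mulr0 cos0.
    by rewrite sumr_const card_ord.
  lra.
have psip : 0 < psi by rewrite lt_def pnz psi0.
have sp : 0 < sin psi by apply: sin_gt0_pi; rewrite psip /=; have := pi_ge0 R; lra.
have ht := tele psi M.
suff h : - (M%:R * sin psi) <= sin (2 * M%:R * psi).
  have h2 : 0 <= sin psi * (2 * C + M%:R) by rewrite -/C in ht; nra.
  rewrite pmulr_rge0 // in h2; lra.
have [s0|s0] := lerP 0 (sin (2 * M%:R * psi)).
  have : 0 <= M%:R * sin psi by rewrite mulr_ge0 // ?ler0n ltW.
  lra.
have big : pi < 2 * M%:R * psi.
  rewrite ltNge; apply/negP => h.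
  have : 0 <= sin (2 * M%:R * psi).
    apply: sin_ge0_pi; rewrite h andbT; apply: mulr_ge0 => //; rewrite mulr_ge0 // ler0n.
  lra.
pose y : R := pi / (2 * M%:R).
have M2 : 0 < 2 * M%:R :> R by lra.
have ey : M%:R * y = pi / 2 by rewrite /y; field; lra.
have y0 : 0 < y by rewrite /y divr_gt0 // pi_gt0.
have y1 : y <= pi / 2.
  have : 1 <= M%:R :> R by rewrite ler1n.
  nra.
have ypsi : y < psi by rewrite /y ltr_pdivrMr // mulrC.
have sy : sin y < sin psi.
  rewrite ltr_sin // in_itv /=; apply/andP; split; try lra; have := pi_ge0 R; lra.
have hn := sin_nat y M.
rewrite ey sin_pihalf normr1 ger0_norm in hn; last first.
  apply: sin_ge0_pi; rewrite (ltW y0) /=; have := pi_ge0 R; lra.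
have := sin_geN1 (2 * M%:R * psi).
nra.
Qed.
End Trig.
Section Alg.
Variable R : realType.
Lemma rsq (r C : R) : r ^+ 2 * (C / r) = r * C.
Proof. have [->|rz] := eqVneq r 0; first by rewrite expr0n /= !mul0r. by field. Qed.

Lemma alg_marked (s r n S C : R) : s != 0 -> n ^+ 2 = s ^+ 2 + r ^+ 2 ->
  2 * (s ^+ 2 * (- (S / s)) + r ^+ 2 * (C / r)) / n ^+ 2 - - (S / s) =
  (S * (r / n * (r / n) - s / n * (s / n)) + C * (s / n * (r / n) + r / n * (s / n))) / s.
Proof.
move=> s0 hn.
have n0 : n != 0.
  apply/eqP => nz; move: hn; rewrite nz expr0n /= => /eqP; rewrite eq_sym paddr_eq0 ?sqr_ge0 //.
  by rewrite sqrf_eq0 (negbTE s0).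
have e : forall a b, (a / n) * (b / n) = a * b / n ^+ 2 by move=> a b; field.
have q0 : s ^+ 2 + r ^+ 2 != 0 by rewrite -hn sqrf_eq0.
rewrite !e rsq hn; field; by rewrite ?s0 ?r0 ?q0.
Qed.

Lemma alg_unmarked (s r n S C : R) : s != 0 -> r != 0 -> n ^+ 2 = s ^+ 2 + r ^+ 2 ->
  2 * (s ^+ 2 * (- (S / s)) + r ^+ 2 * (C / r)) / n ^+ 2 - C / r =
  (C * (r / n * (r / n) - s / n * (s / n)) - S * (s / n * (r / n) + r / n * (s / n))) / r.
Proof.
move=> s0 r0 hn.
have n0 : n != 0.
  apply/eqP => nz; move: hn; rewrite nz expr0n /= => /eqP; rewrite eq_sym paddr_eq0 ?sqr_ge0 //.
  by rewrite sqrf_eq0 (negbTE s0).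
have e : forall a b, (a / n) * (b / n) = a * b / n ^+ 2 by move=> a b; field.
have q0 : s ^+ 2 + r ^+ 2 != 0 by rewrite -hn sqrf_eq0.
rewrite !e hn; field; by rewrite ?s0 ?r0 ?q0.
Qed.
End Alg.
Section Q.
Variables (R : realType) (T : finType) (g : T -> bool).
Local Notation N := #|T|.
Local Notation m := #|[pred x | g x]|.

Lemma card_split : (m + #|[pred x | ~~ g x]| = N)%N.
Proof. rewrite -(cardC [pred x | g x]); congr (_ + _)%N; exact: eq_card. Qed.

Lemma sum_if (u v : R) : \sum_(y : T) (if g y then u else v) = m%:R * u + (N - m)%:R * v.
Proof.
rewrite (bigID g) /=.
rewrite (eq_bigr (fun _ => u)); last by move=> i ->.
rewrite [X in _ + X](eq_bigr (fun _ => v)); last by move=> i /negbTE ->.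
have -> : \sum_(i | g i) u = u *+ m by exact: (sumr_const [pred i | g i] u).
have -> : \sum_(i | ~~ g i) v = v *+ #|[pred i | ~~ g i]| by exact: (sumr_const [pred i | ~~ g i] v).
rewrite !mulr_natl.
have -> : (N - m)%N = #|[pred x | ~~ g x]| by rewrite -card_split addKn.
done.
Qed.

Lemma m_le_N : (m <= N)%N.
Proof. by rewrite -card_split leq_addr. Qed.

Lemma m_lt_N x : ~~ g x -> (m < N)%N.
Proof.
move=> hx; rewrite -card_split -{1}[m]addn0 ltn_add2l.
by apply/card_gt0P; exists x.
Qed.

Variable mpos : (0 < m)%N.

Definition nn : R := Num.sqrt N%:R.
Definition ss : R := Num.sqrt m%:R.
Definition rr : R := Num.sqrt (N - m)%N%:R.
Definition th : R := asin (ss / nn).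

Lemma nn2 : nn ^+ 2 = N%:R. Proof. by rewrite sqr_sqrtr ?ler0n. Qed.
Lemma ss2 : ss ^+ 2 = m%:R. Proof. by rewrite sqr_sqrtr ?ler0n. Qed.
Lemma rr2 : rr ^+ 2 = (N - m)%N%:R. Proof. by rewrite sqr_sqrtr ?ler0n. Qed.
Lemma Nsum : nn ^+ 2 = ss ^+ 2 + rr ^+ 2.
Proof. by rewrite nn2 ss2 rr2 -natrD subnKC // m_le_N. Qed.
Lemma ss_gt0 : 0 < ss. Proof. by rewrite sqrtr_gt0 ltr0n. Qed.
Lemma nn_gt0 : 0 < nn.
Proof. by rewrite sqrtr_gt0 ltr0n (leq_trans mpos m_le_N). Qed.
Lemma rr_neq0 x : ~~ g x -> rr != 0.
Proof. by move=> hx; rewrite sqrtr_eq0 -ltNge ltr0n subn_gt0 (m_lt_N _ hx). Qed.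

Lemma sn_itv : 0 <= ss / nn <= 1.
Proof.
rewrite divr_ge0 ?sqrtr_ge0 //= ler_pdivrMr ?nn_gt0 // mul1r.
by rewrite ler_sqrt ?ler0n // ler_nat m_le_N.
Qed.

Lemma sin_th : sin th = ss / nn.
Proof.
rewrite /th asinK // in_itv /=; case/andP: sn_itv => h1 h2; rewrite h2 andbT; lra.
Qed.

Lemma cos_th : cos th = rr / nn.
Proof.
case/andP: sn_itv => h1 h2.
rewrite /th cos_asin; last by apply/andP; split => //; lra.
have -> : 1 - (ss / nn) ^+ 2 = rr ^+ 2 / nn ^+ 2.
  have n0 := nn_gt0.
  have -> : rr ^+ 2 = nn ^+ 2 - ss ^+ 2 by rewrite Nsum; ring.
  rewrite expr_div_n; field; by rewrite lt0r_neq0.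
rewrite -expr_div_n sqrtr_sqr ger0_norm // divr_ge0 ?sqrtr_ge0 //.
Qed.

Lemma th_itv : 0 <= th <= pi / 2.
Proof.
case/andP: sn_itv => h1 h2.
have hi : -1 <= ss / nn <= 1 by apply/andP; split => //; lra.
rewrite /th asin_lepi2 // andbT.
rewrite leNgt; apply/negP => hlt.
have : sin (asin (ss / nn)) < sin 0.
  rewrite ltr_sin // in_itv /=.
    by rewrite asin_geNpi2 // asin_lepi2.
  apply/andP; split; have := pi_ge0 R; lra.
rewrite sin0 -/th sin_th; lra.
Qed.

Lemma state_formula j x : grover_state R g j x =
  if g x then sin ((2 * j%:R + 1) * th) / ss else cos ((2 * j%:R + 1) * th) / rr.
Proof.
have s0 : ss != 0 by rewrite lt0r_neq0 // ss_gt0.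
have n0 : nn != 0 by rewrite lt0r_neq0 // nn_gt0.
elim: j x => [|j IH] x.
  rewrite /grover_state /= /uniform /NL mulr0 add0r !mul1r -/nn.
  case: (boolP (g x)) => hx.
    rewrite sin_th; field; by rewrite s0 n0.
  have r0 := rr_neq0 _ hx.
  rewrite cos_th; field; by rewrite r0 n0.
rewrite /grover_state iterS -/(grover_state R g j) /grover_iter /refl_uniform /refl_unmarked.
rewrite (eq_bigr (fun y => if g y then - (sin ((2 * j%:R + 1) * th) / ss)
   else cos ((2 * j%:R + 1) * th) / rr)); last by move=> y _; rewrite IH; case: (g y).
rewrite sum_if IH /NL.
have e : (2 * j.+1%:R + 1) * th = (2 * j%:R + 1) * th + (th + th) by rewrite -addn1 natrD; ring.
rewrite e !sinD !cosD !sinD sin_th cos_th -ss2 -rr2 -nn2.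
case: (boolP (g x)) => hx.
  exact: alg_marked s0 Nsum.
exact: alg_unmarked s0 (rr_neq0 _ hx) Nsum.
Qed.

Lemma run_success_formula j : run_success R g j = sin ((2 * j%:R + 1) * th) ^+ 2.
Proof.
have s0 : ss != 0 by rewrite lt0r_neq0 // ss_gt0.
rewrite /run_success.
rewrite (eq_bigr (fun _ => (sin ((2 * j%:R + 1) * th) / ss) ^+ 2)); last first.
  by move=> y hy; rewrite state_formula hy.
have -> : \sum_(i | g i) (sin ((2 * j%:R + 1) * th) / ss) ^+ 2 =
   (sin ((2 * j%:R + 1) * th) / ss) ^+ 2 *+ m by exact: (sumr_const [pred i | g i]).
rewrite -mulr_natl -ss2; field; by rewrite s0.
Qed.

Lemma key_ineq (a b : R) : 0 <= a -> 0 <= b -> a^+2 + b^+2 = 1 -> a^+2 <= b^+2 -> 1 <= b + 2 * a * b.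
Proof.
move=> a0 b0 h1 h2.
have b1 : b <= 1 by nra.
have hb : 1 <= 2 * b ^+ 2 by nra.
nra.
Qed.

Lemma avg_success (Mj t : nat) : (0 < t)%N -> (t <= m)%N ->
  pi / 4 * Num.sqrt (N%:R / t%:R) <= Mj%:R :> R ->
  Mj.+1%:R / 4 <= \sum_(j < Mj.+1) run_success R g j.
Proof.
move=> t0 tm hM.
under eq_bigr => j _ do rewrite run_success_formula.
apply: avg_bound => //; first exact: th_itv.
have e2 : 2 * th = th + th by ring.
rewrite e2 cosD sinD sin_th cos_th => hc.
set a := ss / nn. set b := rr / nn.
have a0 : 0 < a by rewrite divr_gt0 ?ss_gt0 ?nn_gt0.
have b0 : 0 <= b by rewrite divr_ge0 ?sqrtr_ge0.
have hab : a ^+ 2 + b ^+ 2 = 1.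
  rewrite /a /b !expr_div_n -mulrDl -Nsum divff //.
  by rewrite sqrf_eq0 lt0r_neq0 // nn_gt0.
rewrite -/a -/b in hc.
have hk2 : 1 <= b + 2 * a * b by apply: (@key_ineq a b (ltW a0) b0 hab); nra.
have hsq : 1 / a <= Num.sqrt (N%:R / t%:R).
  have -> : 1 / a = Num.sqrt (N%:R / m%:R).
    rewrite sqrtrM ?ler0n // sqrtrV ?ler0n // -/nn -/ss /a; field.
    by rewrite !lt0r_neq0 ?ss_gt0 ?nn_gt0.
  rewrite ler_sqrt; last by rewrite divr_ge0 ?ler0n.
  apply: ler_wpM2l; first by rewrite ler0n.
  rewrite lef_pV2 ?posrE ?ltr0n ?ler_nat //; exact: (leq_trans t0 tm).
have hpi : 2 <= pi :> R by exact: pi_ge2.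
have hsq0 : 0 <= Num.sqrt (N%:R / t%:R) :> R by rewrite sqrtr_ge0.
have hM2 : 1 / (2 * a) + 1 <= Mj.+1%:R.
  rewrite -[Mj.+1%:R]natr1; apply: lerD => //; apply: le_trans hM.
  have -> : 1 / (2 * a) = 1 / 2 * (1 / a) by field; rewrite lt0r_neq0.
  have : 1 / 2 <= pi / 4 :> R by lra.
  have : 0 <= 1 / a by rewrite divr_ge0 // ltW.
  nra.
have ab0 : 0 <= 2 * a * b by apply: mulr_ge0 => //; apply: mulr_ge0 => //; exact: ltW.
have : (1 / (2 * a) + 1) * (2 * a * b) = b + 2 * a * b.
  by field; rewrite lt0r_neq0.
have : (1 / (2 * a) + 1) * (2 * a * b) <= Mj.+1%:R * (2 * a * b) by apply: ler_wpM2r.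
have -> : a * b + b * a = 2 * a * b by ring.
lra.
Qed.
End Q.

Section Main.
Variables (R : realType) (T : finType).

Lemma t0_real (eps : R) : 0 < eps -> eps <= 1 ->
  (t0 eps)%:R = (t0Z eps)%:~R :> R /\ ln eps / (2 * ln (3/4)) <= (t0 eps)%:R
  /\ 0 <= ln eps / (2 * ln (3/4)).
Proof.
move=> e0 e1.
have L0 : ln (3/4 : R) < 0 by apply: ln_lt0; apply/andP; split; lra.
have le0 : ln eps <= 0 by apply: ln_le0.
have q0 : 0 <= ln eps / (2 * ln (3/4)).
  apply: mulr_le0 => //; rewrite ltW // invr_lt0; lra.
have z0 : 0 <= t0Z eps by rewrite /t0Z ceil_ge0; lra.
have e : (t0 eps)%:R = (t0Z eps)%:~R :> R by rewrite /t0 natr_absz ger0_norm.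
split => //; split => //; rewrite e; exact: ceil_ge.
Qed.

Lemma pow_eps (eps : R) : 0 < eps -> eps <= 1 -> (3/4) ^+ (2 * t0 eps) <= eps.
Proof.
move=> e0 e1.
have [_ [hq q0]] := @t0_real eps e0 e1.
have L0 : ln (3/4 : R) < 0 by apply: ln_lt0; apply/andP; split; lra.
rewrite -ler_ln ?posrE ?exprn_gt0 //.
rewrite lnXn; last lra.
set L := ln (3/4 : R) in L0 hq q0 *.
set q := ln eps / (2 * L) in hq q0.
have eq : q * (2 * L) = ln eps.
  by rewrite /q; field; rewrite lt_eqF.
rewrite -mulr_natr natrM.
nra.
Qed.

Lemma Jmax_ge (eps : R) : pi / 4 * Num.sqrt ((NL T)%:R / (t0 eps)%:R) <= (Jmax T eps)%:R :> R.
Proof.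
rewrite /Jmax [X in _ <= X]natr_absz ger0_norm; first exact: ceil_ge.
rewrite ceil_ge0; apply: (@lt_le_trans _ _ 0); first lra.
apply: mulr_ge0; [apply: divr_ge0 => //; exact: pi_ge0 | exact: sqrtr_ge0].
Qed.

Lemma part2 (g : T -> bool) (p : nat -> R) (eps : R) :
  0 < eps -> eps <= 1 -> (forall t, 0 <= p t <= 1) ->
  (forall t, (0 < t)%N -> #|[pred x | g x]| = t -> p t = 1) ->
  (exists x, g x) -> fail_prob g p eps <= eps.
Proof.
move=> e0 e1 hp hp1 [x gx].
have mpos : (0 < #|[pred x | g x]|)%N by apply/card_gt0P; exists x.
rewrite /fail_prob.
set k := t0 eps.
set P := \prod_(1 <= t < k.+1) (1 - p t).
have P0 : 0 <= P by apply: prodr_ge0 => t _; case/andP: (hp t) => _ h; rewrite subr_ge0.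
have P1 : P <= 1 by apply: prodr_ile1 => t _; case/andP: (hp t) => h1 h2; rewrite subr_ge0 h2 gerBl.
have [mk|km] := leqP #|[pred x | g x]| k.
  have -> : P = 0.
    rewrite /P (bigD1_seq #|[pred x | g x]|) /=; last exact: iota_uniq.
      by rewrite (hp1 _ mpos erefl) subrr mul0r.
    by rewrite mem_index_iota mpos ltnS.
  by rewrite mul0r ltW.
set J := Jmax T eps.
set A := (\sum_(j < J.+1) run_success R g j) / J.+1%:R.
have hJ : 0 < J.+1%:R :> R by rewrite ltr0n.
have A1 : A <= 1.
  rewrite /A ler_pdivrMr // mul1r.
  apply: (@le_trans _ _ (\sum_(j < J.+1) (1:R))); last by rewrite sumr_const card_ord.
  apply: ler_sum => j _; rewrite run_success_formula //.
have hb : (1 - A) ^+ (2 * k) <= (3/4) ^+ (2 * k).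
  have [k0|kpos] := eqVneq k 0%N; first by rewrite k0 muln0 !expr0.
  have A4 : 1 / 4 <= A.
    have h := @avg_success R T g mpos J k _ (ltnW km) (Jmax_ge eps).
    rewrite /A ler_pdivlMr // mulrC mul1r; apply: h; by rewrite lt0n.
  apply: lerXn2r; rewrite ?nnegrE; lra.
have hX : 0 <= (1 - A) ^+ (2 * k) by apply: exprn_ge0; rewrite subr_ge0.
apply: (le_trans (ler_pM P0 hX P1 hb)).
by rewrite mul1r; exact: pow_eps.
Qed.
Lemma sum_isqrt (k : nat) : \sum_(1 <= t < k.+1) (Num.sqrt (t%:R : R))^-1 <= 2 * Num.sqrt k%:R.
Proof.
elim: k => [|k IH]; first by rewrite big_geq // mulr_ge0 ?sqrtr_ge0.
rewrite big_nat_recr //=.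
set u := Num.sqrt (k.+1%:R : R). set v := Num.sqrt (k%:R : R).
have u0 : 0 < u by rewrite sqrtr_gt0 ltr0n.
have v0 : 0 <= v by rewrite sqrtr_ge0.
have uv : u ^+ 2 = v ^+ 2 + 1 by rewrite !sqr_sqrtr ?ler0n // -natr1.
set w := u^-1.
have uw : u * w = 1 by rewrite mulfV // lt0r_neq0.
have w0 : 0 < w by rewrite invr_gt0.
have h1 : 1 <= 2 * u * (u - v) by nra.
have h2 : w <= 2 * (u - v).
  have : w * 1 <= w * (2 * u * (u - v)) by rewrite ler_wpM2l // ltW.
  have -> : w * (2 * u * (u - v)) = 2 * (u - v) * (u * w) by ring.
  by rewrite uw !mulr1.
move: IH; rewrite -/v => IH; lra.
Qed.

Lemma sqrt_div (a b : R) : 0 <= a -> 0 <= b -> Num.sqrt (a / b) = Num.sqrt a * (Num.sqrt b)^-1.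
Proof. by move=> a0 b0; rewrite sqrtrM // sqrtrV. Qed.

Lemma exact_le (t : nat) :
  (exact_queries R T t)%:R <= pi / 4 * (Num.sqrt (NL T)%:R * (Num.sqrt t%:R)^-1) + 1 :> R.
Proof.
rewrite /exact_queries natrD /nearest subrK natr_absz ger0_norm.
  by rewrite lerD2r -sqrt_div ?ler0n //; exact: floor_le.
rewrite floor_ge0; apply: mulr_ge0; [apply: divr_ge0 => //; exact: pi_ge0 | exact: sqrtr_ge0].
Qed.

Lemma sum_run (J : nat) (js : seq nat) : all (fun j => j <= J)%N js ->
  (\sum_(j <- js) run_queries j <= size js * J.+1)%N.
Proof.
elim: js => [|j js IH] /=; first by rewrite big_nil.
case/andP => hj hs; rewrite big_cons mulSn /run_queries addn1.
by apply: leq_add => //; apply: IH.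
Qed.

Lemma part1 (cq : nat) (eps : R) (k : nat) (js : seq nat) : 0 < eps -> eps <= 1 ->
  @valid_trace R T eps k js ->
  (cq * @trace_oracle_uses R T k js)%:R <= @W_Zalka R T cq eps.
Proof.
move=> e0 e1 [hk hjs hsz hall].
have [eK _] := @t0_real eps e0 e1.
have eW : (Num.ceil (ln (1/eps) / (2 * ln (4/3))))%:~R = (t0 eps)%:R :> R.
  rewrite eK /t0Z; congr ((Num.ceil _)%:~R).
  have -> : (4/3 : R) = (3/4)^-1 by rewrite invf_div.
  rewrite div1r !lnV ?posrE //; last lra.
rewrite /W_Zalka /= eW natrM; apply: ler_wpM2l; first exact: ler0n.
set K := t0 eps.
rewrite /trace_oracle_uses natrD natr_sum.
set n := Num.sqrt (NL T)%:R.
set sK := Num.sqrt (K%:R : R).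
have n0 : 0 <= n by rewrite sqrtr_ge0.
have sK0 : 0 <= sK by rewrite sqrtr_ge0.
have pi0 : 0 <= pi / 4 :> R by apply: divr_ge0 => //; exact: pi_ge0.
have s1 : \sum_(1 <= t < k.+1) (exact_queries R T t)%:R <= pi / 4 * n * (2 * sK) + K%:R.
  apply: (le_trans (ler_sum _ (fun t _ => exact_le t))).
  rewrite big_split /= -!mulr_sumr sumr_const_nat subn1 /=.
  have hS := sum_isqrt k.
  have hS2 : Num.sqrt (k%:R : R) <= sK by rewrite ler_sqrt ?ler0n // ler_nat.
  have hkK : k%:R <= K%:R :> R by rewrite ler_nat.
  have : pi / 4 * (n * \sum_(1 <= i < k.+1) (Num.sqrt (i%:R : R))^-1) <=
         pi / 4 * (n * (2 * sK)).
    apply: ler_wpM2l => //; apply: ler_wpM2l => //; lra.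
  rewrite -[1 *+ k]/(k%:R) -/n => h; lra.
set J := Jmax T eps.
have hJ : J%:R <= pi / 4 * (n * sK^-1) + 1 :> R.
  rewrite /J /Jmax [X in X <= _]natr_absz ger0_norm; last first.
    rewrite ceil_ge0; apply: (@lt_le_trans _ _ 0); first lra.
    by apply: mulr_ge0 => //; exact: sqrtr_ge0.
  have := ceil_itv (pi / 4 * Num.sqrt ((NL T)%:R / (t0 eps)%:R) : R).
  rewrite intrB sqrt_div ?ler0n // -/n -/K -/sK => /andP[h _]; lra.
have s2 : (\sum_(j <- js) run_queries j)%:R <= (2 * K * J.+1)%:R :> R.
  rewrite ler_nat; apply: (leq_trans (sum_run _ _ hall)).
  by rewrite leq_mul2r hsz orbT.
have eKs : K%:R * sK^-1 = sK.
  have := @rsq R sK 1; rewrite sqr_sqrtr ?ler0n // mul1r mulr1 => ->; done.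
have s3 : (2 * K * J.+1)%:R <= pi / 2 * n * sK + 4 * K%:R :> R.
  rewrite !natrM -[J.+1%:R]natr1.
  have hK0 : 0 <= 2 * K%:R :> R by rewrite mulr_ge0 ?ler0n.
  have hJ' : J%:R + 1 <= pi / 4 * (n / sK) + 1 + 1 :> R by lra.
  apply: (le_trans (ler_wpM2l hK0 hJ')).
  have -> : 2 * K%:R * (pi / 4 * (n / sK) + 1 + 1) = pi / 2 * n * (K%:R / sK) + 4 * K%:R :> R.
    have gen : forall w : R, 2 * K%:R * (pi / 4 * (n * w) + 1 + 1) = pi / 2 * n * (K%:R * w) + 4 * K%:R.
      by move=> w; field.
    exact: gen.
  by rewrite eKs.
lra.
Qed.
End Main.

Theorem lemma5 (R : realType) (T : finType) (g : T -> bool) (eps : R)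
    (cq : nat) (p : nat -> R) :
  0 < eps -> eps <= 1 ->
  (forall t, 0 <= p t <= 1) ->
  (forall t, (0 < t)%N -> #|[pred x | g x]| = t -> p t = 1) ->
  (forall (k : nat) (js : seq nat), @valid_trace R T eps k js ->
     (cq * @trace_oracle_uses R T k js)%:R <= @W_Zalka R T cq eps) /\
  ((exists x, g x) -> fail_prob g p eps <= eps).
Proof.
move=> e0 e1 hp hp1; split.
  by move=> k js ht; exact: (@part1 R T cq eps k js e0 e1 ht).
by move=> hx; exact: (@part2 R T g p eps e0 e1 hp hp1 hx).
Qed.
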